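(* Let $\mathcal{C}$ be a 3XOR instance with $\mathrm{val}(\mathcal{C})\ge 1-\epsilon$. Then $\mathrm{GI}(G_{\mathcal{C}},G_{\mathcal{C}^0})\ge 1-2\epsilon/3$.
   Context: A 3XOR instance $\mathcal{C}=(C_1,\dots,C_m)$ over a variable set $\mathcal{X}$ with $|\mathcal{X}|=n$ consists of equations $C_i: x_{j_1}+x_{j_2}+x_{j_3}=b$ over $\mathbb{Z}_2$ on three distinct variables. $\mathrm{val}(\mathcal{C})$ is the maximum over assignments $\tau:\mathcal{X}\to\mathbb{Z}_2$ of the fraction of satisfied equations. The homogeneous version $C^0$ of $C$ is the same equation with right-hand side $0$, and $\mathcal{C}^0=\{C^0:C\in\mathcal{C}\}$. Graph $G_{\mathcal{C}}$: for each variable $x$ there are two ''variable vertices'' $x\mapsto 0$, $x\mapsto 1$ joined by an edge. For each equation $C$ on $x_1,x_2,x_3$ there are 4 ''constraint vertices'' $\alpha_C$, one for each assignment $\alpha=(x_1\mapsto a_1,x_2\mapsto a_2,x_3\mapsto a_3)$ satisfying $C$ (distinct constraints get distinct constraint vertices); these 4 vertices form a clique, and each $\alpha_C$ is adjacent to the three variable vertices $x_i\mapsto a_i$ consistent with it. Variable vertices are shared among all constraints. Thus $G_{\mathcal{C}}$ has $4m+2n$ vertices and $18m+n$ edges. For graphs $G,H$ on equally many vertices, $\mathrm{GI}(G,H)=\max_{\pi}\frac{|\{e\in E(G):\pi(e)\in E(H)\}|}{\max\{|E(G)|,|E(H)|\}}$ over bijections $\pi:V(G)\to V(H)$. *)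

(* Defs.v *)
From mathcomp Require Import all_boot all_order all_algebra.
Set Implicit Arguments. Unset Strict Implicit. Unset Printing Implicit Defensive.
Import Order.TTheory GRing.Theory Num.Theory.

(* An equation x_{j1} + x_{j2} + x_{j3} = b over Z_2: ((j1, j2, j3), b). *)
Definition xeqn (n : nat) := ('I_n * 'I_n * 'I_n * bool)%type.
Definition ev1 n (e : xeqn n) : 'I_n := e.1.1.1.
Definition ev2 n (e : xeqn n) : 'I_n := e.1.1.2.
Definition ev3 n (e : xeqn n) : 'I_n := e.1.2.
Definition erhs n (e : xeqn n) : bool := e.2.

Definition wf3xor n m (C : 'I_m -> xeqn n) : Prop :=
  forall i, [/\ ev1 (C i) != ev2 (C i), ev1 (C i) != ev3 (C i) & ev2 (C i) != ev3 (C i)].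

Definition sat n (e : xeqn n) (tau : {ffun 'I_n -> bool}) : bool :=
  (tau (ev1 e) (+) tau (ev2 e) (+) tau (ev3 e)) == erhs e.

Definition xorval (R : numFieldType) n m (C : 'I_m -> xeqn n) : R :=
  ((\max_(tau : {ffun 'I_n -> bool}) #|[set i | sat (C i) tau]|)%:R / m%:R)%R.

Definition homog n m (C : 'I_m -> xeqn n) : 'I_m -> xeqn n :=
  fun i => ((C i).1, false).

(* Ambient vertex type: variable vertices (x |-> a), and candidate
   constraint vertices (i, (a1,a2,a3)) = assignment (x_{j1}|->a1, x_{j2}|->a2, x_{j3}|->a3)
   for constraint C_i. *)
Definition vtx n m := (('I_n * bool) + ('I_m * (bool * bool * bool)))%type.

Definition csat n (e : xeqn n) (a : bool * bool * bool) : bool :=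
  (a.1.1 (+) a.1.2 (+) a.2) == erhs e.

Definition verts n m (C : 'I_m -> xeqn n) : {set vtx n m} :=
  [set v : vtx n m | match v with inl _ => true | inr (i, a) => csat (C i) a end].

Definition incident n (e : xeqn n) (a : bool * bool * bool) (x : 'I_n) (c : bool) : bool :=
  [|| (x == ev1 e) && (c == a.1.1), (x == ev2 e) && (c == a.1.2)
    | (x == ev3 e) && (c == a.2)].

Definition adj n m (C : 'I_m -> xeqn n) (u v : vtx n m) : bool :=
  match u, v with
  | inl (x, a), inl (y, c) => (x == y) && (a != c)
  | inr (i, a), inr (j, c) => (i == j) && (a != c)
  | inr (i, a), inl (x, c) => incident (C i) a x c
  | inl (x, c), inr (i, a) => incident (C i) a x c
  end.

Definition edges n m (C : 'I_m -> xeqn n) : {set {set vtx n m}} :=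
  [set [set u; v] | u in verts C, v in verts C & adj C u v].

Definition is_bij (T : finType) (VG VH : {set T}) (pi : {ffun T -> T}) : bool :=
  dinjectiveb pi VG && (pi @: VG == VH).

Definition GI (R : numFieldType) (T : finType) (VG VH : {set T})
    (EG EH : {set {set T}}) : R :=
  ((\max_(pi : {ffun T -> T} | is_bij VG VH pi)
      #|[set e in EG | pi @: e \in EH]|)%:R / (maxn #|EG| #|EH|)%:R)%R.

(* Main.v *)
Require Import Defs.
From mathcomp Require Import all_boot all_order all_algebra.
From mathcomp.algebra_tactics Require Import ring lra.
Import Order.TTheory GRing.Theory Num.Theory.
Set Implicit Arguments. Unset Strict Implicit. Unset Printing Implicit Defensive.

Lemma card_csat3 (b:bool) : #|[set a : bool*bool*bool | (a.1.1 (+) a.1.2 (+) a.2) == b]| = 4.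
Proof.
have -> : [set a : bool*bool*bool | (a.1.1 (+) a.1.2 (+) a.2) == b] =
  [set (p.1, p.2, p.1 (+) p.2 (+) b) | p in [set: bool*bool]].
  apply/setP => -[[a1 a2] a3]; rewrite inE; apply/idP/imsetP.
    move=> /eqP H; exists (a1, a2); rewrite ?inE //= -H.
    by case: a1 a2 a3 {H} => [] [] [].
  by case=> -[p1 p2] _ [-> -> ->] /=; case: p1 p2 b => [] [] [].
rewrite card_imset; first by rewrite cardsT card_prod card_bool.
by move=> [p1 p2] [q1 q2] [-> ->].
Qed.

Section S.
Variables (n m : nat) (C : 'I_m -> xeqn n) (t : {ffun 'I_n -> bool}).

Definition dd (i : 'I_m) : bool := ~~ sat (C i) t.
Definition fa (i : 'I_m) (a : bool * bool * bool) : bool * bool * bool :=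
  (a.1.1 (+) t (ev1 (C i)), a.1.2 (+) t (ev2 (C i)), a.2 (+) t (ev3 (C i)) (+) dd i).
Definition pimap (v : vtx n m) : vtx n m :=
  match v with inl (x, a) => inl (x, a (+) t x) | inr (i, a) => inr (i, fa i a) end.

Lemma faK i a : fa i (fa i a) = a.
Proof.
case: a => [[a1 a2] a3]; rewrite /fa /=.
move: (t (ev1 (C i))) (t (ev2 (C i))) (t (ev3 (C i))) (dd i) => k1 k2 k3 d.
by case: a1 a2 a3 k1 k2 k3 d => [] [] [] [] [] [] [].
Qed.

Lemma pimapK v : pimap (pimap v) = v.
Proof.
case: v => [[x a]|[i a]] /=; last by rewrite faK.
by rewrite -addbA addbb addbF.
Qed.

Lemma verts_pi v : (pimap v \in verts (homog C)) = (v \in verts C).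
Proof.
case: v => [[x a]|[i [[a1 a2] a3]]]; rewrite !inE //= /csat /fa /dd /sat /=.
move: (t (ev1 (C i))) (t (ev2 (C i))) (t (ev3 (C i))) (erhs (C i)) => k1 k2 k3 b.
by case: a1 a2 a3 k1 k2 k3 b => [] [] [] [] [] [] [].
Qed.

Lemma verts_pi' v : (pimap v \in verts C) = (v \in verts (homog C)).
Proof. by rewrite -{2}(pimapK v) verts_pi. Qed.

Lemma inc_core {e1 e2 e3 x : 'I_n} {a1 a2 a3 c d : bool} :
  [|| (x == e1) && (c == a1), (x == e2) && (c == a2) | (x == e3) && (c == a3)] ->
  ~~ [|| (x == e1) && (c (+) t x == a1 (+) t e1), (x == e2) && (c (+) t x == a2 (+) t e2)
       | (x == e3) && (c (+) t x == a3 (+) t e3 (+) d)] ->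
  [/\ d, x = e3 & c = a3].
Proof.
case/or3P => /andP[/eqP ex /eqP ec]; subst; rewrite !eqxx /= ?orbT //.
by case: d; rewrite ?addbF ?eqxx ?orbT.
Qed.

Lemma inc_eq (D : 'I_m -> xeqn n) i (h : (D i).1 = (C i).1) a x c :
  incident (D i) a x c = incident (C i) a x c.
Proof. by rewrite /incident /ev1 /ev2 /ev3 h. Qed.

Lemma adj_pi (D1 D2 : 'I_m -> xeqn n) (h1 : forall i, (D1 i).1 = (C i).1)
  (h2 : forall i, (D2 i).1 = (C i).1) u v :
  adj D1 u v -> ~~ adj D2 (pimap u) (pimap v) ->
  exists i a, dd i /\ ((u = inr (i, a) /\ v = inl (ev3 (C i), a.2)) \/
                       (v = inr (i, a) /\ u = inl (ev3 (C i), a.2))).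
Proof.
case: u => [[x a]|[i a]]; case: v => [[y c]|[j c]] /=.
- move=> /andP[/eqP <- ac] /negP[]; rewrite eqxx /=.
  by case: a c (t x) ac => [] [] [].
- rewrite !inc_eq // => H1 H2.
  case: c H1 H2 => [[c1 c2] c3] H1 H2.
  have [di -> ->] := inc_core H1 H2.
  by exists j, (c1, c2, c3); split => //; right.
- rewrite !inc_eq // => H1 H2.
  case: a H1 H2 => [[a1 a2] a3] H1 H2.
  have [di -> ->] := inc_core H1 H2.
  by exists i, (a1, a2, a3); split => //; left.
- move=> /andP[/eqP <- ac] /negP[]; rewrite eqxx /=.
  apply: contra ac => /eqP H; apply/eqP.
  by rewrite -(faK i a) H faK.
Qed.

End S.

Section S2.
Variables (n m : nat) (C : 'I_m -> xeqn n) (t : {ffun 'I_n -> bool}).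

Definition g3 (v : vtx n m) : {set vtx n m} :=
  match v with inl _ => set0 | inr (i, a) => [set inr (i, a); inl (ev3 (C i), a.2)] end.
Definition Bad (D : 'I_m -> xeqn n) (Q : pred 'I_m) : {set vtx n m} :=
  [set v : vtx n m | match v with inl _ => false | inr (i, a) => Q i && csat (D i) a end].

Lemma lost_sub (D1 D2 : 'I_m -> xeqn n) (h1 : forall i, (D1 i).1 = (C i).1)
  (h2 : forall i, (D2 i).1 = (C i).1)
  (hv : forall v, v \in verts D1 -> pimap C t v \in verts D2) e :
  e \in edges D1 -> pimap C t @: e \notin edges D2 -> e \in g3 @: Bad D1 (dd C t).
Proof.
move=> /imset2P[u v uV]; rewrite inE => /andP[vV adjuv] -> nE.
rewrite imsetU1 imset_set1 in nE.
case: (boolP (adj D2 (pimap C t u) (pimap C t v))) => h.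
  case/negP: nE; apply/imset2P; exists (pimap C t u) (pimap C t v) => //.
  by apply: hv. by rewrite inE hv ?h.
have [i [a [di [[eu ev]|[ev eu]]]]] := adj_pi h1 h2 adjuv h; subst u v.
  by apply/imsetP; exists (inr (i, a)) => //; rewrite inE di; rewrite inE in uV.
apply/imsetP; exists (inr (i, a)); first by rewrite inE di; rewrite inE in vV.
by rewrite /= setUC.
Qed.

Lemma card_Bad (D : 'I_m -> xeqn n) (Q : pred 'I_m) :
  #|Bad D Q| = 4 * #|[set i | Q i]|.
Proof.
have -> : Bad D Q = inr @: [set p : 'I_m * (bool * bool * bool) | Q p.1 && csat (D p.1) p.2].
  apply/setP => -[[x a]|[i a]]; rewrite !inE.
    by apply/esym/negbTE/negP => /imsetP[? ?].
  apply/idP/imsetP; first by move=> H; exists (i, a); rewrite ?inE.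
  by case=> -[j b]; rewrite inE /= => H [-> ->].
rewrite card_imset; last by move=> ? ? [].
rewrite -sum1dep_card.
transitivity (\sum_(i | Q i) \sum_(a | csat (D i) a) 1)%N.
  by rewrite pair_big_dep sum1dep_card.
rewrite (eq_bigr (fun _ => 4)); last first.
  by move=> i _; rewrite sum1dep_card card_csat3.
by rewrite big_distrr /= muln1.
Qed.

End S2.

Section S3.
Variables (n m : nat) (C : 'I_m -> xeqn n) (t : {ffun 'I_n -> bool}).

Definition Pset := [set e in edges C | pimap C t @: e \in edges (homog C)].

Lemma cardG : #|edges C| <= #|Pset| + 4 * #|[set i | dd C t i]|.
Proof.
have sub : edges C \subset Pset :|: g3 C @: Bad C (dd C t).
  apply/subsetP => e eE; rewrite inE; case: (boolP (pimap C t @: e \in edges (homog C))) => h.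
    by rewrite inE eE h.
  rewrite (lost_sub (D1:=C) (D2:=homog C) _ _ _ eE h) ?orbT //.
  by move=> v; rewrite verts_pi.
apply: (leq_trans (subset_leq_card sub)).
apply: (leq_trans (leq_card_setU _ _).1).
by rewrite leq_add2l -(card_Bad C) leq_imset_card.
Qed.

Lemma cardH : #|edges (homog C)| <= #|Pset| + 4 * #|[set i | dd C t i]|.
Proof.
have sub : edges (homog C) \subset (fun e : {set vtx n m} => pimap C t @: e) @: Pset :|: g3 C @: Bad (homog C) (dd C t).
  apply/subsetP => f fE; rewrite inE; case: (boolP (pimap C t @: f \in edges C)) => h.
    have K : pimap C t @: (pimap C t @: f) = f.
      by rewrite -imset_comp (eq_imset _ (pimapK C t)) imset_id.
    apply/orP; left; apply/imsetP; exists (pimap C t @: f); last by rewrite K.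
    by rewrite inE h K fE.
  rewrite (lost_sub (D1:=homog C) (D2:=C) _ _ _ fE h) ?orbT //.
  by move=> v; rewrite verts_pi'.
apply: (leq_trans (subset_leq_card sub)).
apply: (leq_trans (leq_card_setU _ _).1).
rewrite -(card_Bad (homog C)); apply: leq_add; apply: leq_imset_card.
Qed.

Definition gsel (b : bool) (v : vtx n m) : {set vtx n m} :=
  match v with inl _ => set0 | inr (i, a) =>
    [set inr (i, a); if b then inl (ev1 (C i), a.1.1) else inl (ev2 (C i), a.1.2)] end.

Lemma gsel_inr b b' p q : gsel b (inr p) = gsel b' (inr q) -> p = q.
Proof.
case: p => i a; case: q => j c E.
have : inr (i, a) \in gsel b' (inr (j, c)) by rewrite -E /= set21.
by rewrite /= in_set2; case: b' {E} => /=; rewrite orbF => /eqP [-> ->].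
Qed.

Lemma cardL : wf3xor C -> 8 * m <= #|edges C|.
Proof.
move=> wf.
pose CV := Bad C predT.
have cCV : #|CV| = 4 * m.
  rewrite card_Bad; congr (_ * _).
  by rewrite (_ : [set i : 'I_m | predT i] = setT) ?cardsT ?card_ord //; apply/setP => i; rewrite !inE.
have inj b : {in CV &, injective (gsel b)}.
  move=> [[x a]|p] [[y c]|q]; rewrite !inE //= => _ _ E.
  by rewrite (gsel_inr E).
have sub b : gsel b @: CV \subset edges C.
  apply/subsetP => e /imsetP[[[x a]|[i a]]]; rewrite inE //= => ha ->.
  apply/imset2P; exists (inr (i, a)) (if b then inl (ev1 (C i), a.1.1) else inl (ev2 (C i), a.1.2))
    => //; first by rewrite inE.
  by case: b; rewrite !inE /= /incident !eqxx /= ?orbT.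
have dis : gsel true @: CV :&: gsel false @: CV = set0.
  apply/setP => e; rewrite !inE; apply/negP => /andP[/imsetP[v vC ->] /imsetP[w wC E]].
  case: v vC E => [[x a]|[i a]]; rewrite inE //= => _.
  case: w wC => [[y c]|[j c]]; rewrite inE //= => _ E.
  have [eij eac] := @gsel_inr true false (i, a) (j, c) E; subst j c.
  have : inl (ev2 (C i), a.1.2) \in gsel true (inr (i, a)) by rewrite /= E set22.
  rewrite /= in_set2 /= => /eqP [e21 _].
  by have [n12 _ _] := wf i; rewrite e21 eqxx in n12.
have sU : gsel true @: CV :|: gsel false @: CV \subset edges C by rewrite subUset !sub.
apply: leq_trans (subset_leq_card sU).
by rewrite cardsU dis cards0 subn0 !card_in_imset // cCV -mulnDl.
Qed.
End S3.
Local Open Scope ring_scope.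

Theorem lemma4p1 (R : realFieldType) (n m : nat) (C : 'I_m -> xeqn n) (eps : R) :
  (0 < m)%N -> wf3xor C ->
  1 - eps <= @xorval R n m C ->
  1 - 2 * eps / 3 <= @GI R _ (verts C) (verts (homog C)) (edges C) (edges (homog C)).
Proof.
move=> m0 wf hval.
rewrite /xorval (bigop.bigmax_eq_arg [ffun=> false]) // in hval.
set t := [arg max_(_ > _) _]%N in hval.
set U := #|[set i | dd C t i]|.
have hS : (#|[set i | sat (C i) t]| + U)%N = m.
  rewrite /U (_ : [set i | dd C t i] = ~: [set i | sat (C i) t]) ?cardsC ?card_ord //.
  by apply/setP => i; rewrite !inE.
have m0R : (0 : R) < m%:R by rewrite ltr0n.
have hm : (m%:R : R) = #|[set i | sat (C i) t]|%:R + U%:R by rewrite -natrD hS.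
rewrite ler_pdivlMr // in hval.
have U0 : (0 : R) <= U%:R by rewrite ler0n.
have hU : (U%:R : R) <= eps * m%:R by rewrite hm in hval *; nra.
have e0 : 0 <= eps by nra.
pose pi := [ffun v => pimap C t v].
have Epi : forall e : {set vtx n m}, pi @: e = pimap C t @: e.
  by move=> e; apply: eq_imset => v; rewrite ffunE.
have hbij : is_bij (verts C) (verts (homog C)) pi.
  apply/andP; split.
    apply/dinjectiveP => u v _ _; rewrite !ffunE => E.
    by rewrite -(pimapK C t u) E pimapK.
  apply/eqP/setP => w; apply/imsetP/idP.
    by case=> v vV ->; rewrite ffunE verts_pi.
  by move=> wV; exists (pimap C t w); rewrite ?verts_pi' ?ffunE ?pimapK.
have EP : [set e in edges C | pi @: e \in edges (homog C)] = Pset C t.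
  by apply/setP => e; rewrite !inE Epi.
rewrite /GI.
set Pmax := (\max_(_ | _) _)%N.
have hPm : (#|Pset C t| <= Pmax)%N.
  by rewrite -EP /Pmax; apply: (bigop.leq_bigmax_cond _ hbij).
set M := maxn _ _.
have hM1 : (M <= #|Pset C t| + 4 * U)%N by rewrite geq_max cardG cardH.
have hM2 : (8 * m <= M)%N := leq_trans (cardL wf) (leq_maxl _ _).
have M0 : (0 : R) < M%:R by rewrite ltr0n (leq_trans _ hM2) // muln_gt0.
rewrite ler_pdivlMr //.
have hM1R : (M%:R : R) <= #|Pset C t|%:R + 4 * U%:R.
  by rewrite -(natrM R 4) -natrD ler_nat.
have hM2R : 8 * (m%:R : R) <= M%:R by rewrite -(natrM R 8) ler_nat.
have hPmR : (#|Pset C t|%:R : R) <= Pmax%:R by rewrite ler_nat.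
have key : eps * (8 * m%:R) <= eps * M%:R by rewrite ler_wpM2l.
nra.
Qed.
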